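(* Let $X$ be a complex Banach space and $T:X\to X$ a bounded linear operator which is an $m$-isometry and is recurrent. Then $T$ is a surjective isometry.
   Context: For $m\in\mathbb N$ and $p\in[1,\infty)$, $T$ is an $(m,p)$-isometry if $\sum_{k=0}^m(-1)^{m-k}\binom mk\|T^kx\|^p=0$ for every $x\in X$; $T$ is an $m$-isometry if it is an $(m,p)$-isometry for some $p\in[1,\infty)$. $T$ is recurrent if for every non-empty open $U\subset X$ there is a positive integer $k$ with $U\cap T^{-k}(U)\neq\emptyset$. *)

(* Defs.v *)
From mathcomp Require Import all_boot all_algebra.
From mathcomp Require Import all_classical all_reals all_analysis.
From mathcomp Require Export complex.
Export numFieldNormedType.Exports.
Import GRing.Theory Num.Theory.

Set Implicit Arguments.
Unset Strict Implicit.
Unset Printing Implicit Defensive.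

Local Open Scope ring_scope.
Local Open Scope complex_scope.
Local Open Scope classical_set_scope.

(* The norm of a vector in a complex normed space, as a real number
   (the library norm takes values in R[i], with zero imaginary part). *)
Definition nrm (R : realType) (V : normedModType R[i]) (x : V) : R :=
  complex.Re `|x|.

Definition bounded_op (R : realType) (V : normedModType R[i]) (T : V -> V) : Prop :=
  exists M : R, forall x : V, nrm (T x) <= M * nrm x.

Definition mp_isometry (R : realType) (V : normedModType R[i]) (T : V -> V)
    (m : nat) (p : R) : Prop :=
  forall x : V,
    \sum_(k < m.+1) ((-1) ^+ (m - k) * ('C(m, k))%:R * (nrm (iter k T x)) `^ p) = 0.

Definition m_isometry (R : realType) (V : normedModType R[i]) (T : V -> V)
    (m : nat) : Prop :=
  exists p : R, 1 <= p /\ mp_isometry T m p.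

Definition recurrent (R : realType) (V : normedModType R[i]) (T : V -> V) : Prop :=
  forall U : set V, open U -> U !=set0 ->
    exists k : nat, (0 < k)%N /\ (U `&` (iter k T) @^-1` U) !=set0.

(* Main.v *)
Require Import Defs.
From mathcomp Require Import all_boot all_algebra.
From mathcomp Require Import all_classical all_reals all_analysis.
From mathcomp Require Import complex.
From mathcomp Require Import lra.
Import order.Order.TTheory GRing.Theory Num.Theory.
Local Open Scope ring_scope.
Local Open Scope complex_scope.
Local Open Scope classical_set_scope.
Section Nrm.
Context {R : realType} {X : normedModType R[i]}.

Lemma normE (v : X) : `|v| = (nrm v)%:C.
Proof.
rewrite /nrm; move: (normr_ge0 v); case: (`|v|) => a b.
by rewrite lecE /= => /andP[/eqP -> _].
Qed.

Lemma nrm_ge0 (v : X) : 0 <= nrm v.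
Proof. by move: (normr_ge0 v); rewrite normE lecE /= => /andP[]. Qed.

Lemma nrm_add (u v : X) : nrm (u + v) <= nrm u + nrm v.
Proof. by rewrite -lecR rmorphD /= -!normE ler_normD. Qed.

Lemma nrmN (v : X) : nrm (- v) = nrm v.
Proof. by rewrite /nrm normrN. Qed.

Lemma nrmB (u v : X) : nrm (u - v) = nrm (v - u).
Proof. by rewrite /nrm distrC. Qed.

Lemma nrm0 : nrm (0 : X) = 0.
Proof. by rewrite /nrm normr0. Qed.

Lemma nrm_dist (u v : X) : `|nrm u - nrm v| <= nrm (u - v).
Proof.
rewrite ler_norml; apply/andP; split.
  have := nrm_add (v - u) u; rewrite subrK nrmB; lra.
have := nrm_add (u - v) v; rewrite subrK; lra.
Qed.

Lemma nbhs_nrmP (x : X) (P : X -> Prop) :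
  nbhs x P <-> exists2 e : R, 0 < e & forall y, nrm (x - y) < e -> P y.
Proof.
rewrite nbhs_ballP; split.
  move=> [e /= e0 H]; exists (complex.Re e).
    by move: e0; rewrite ltcE /= => /andP[].
  move=> y hy; apply: H; rewrite -ball_normE /= normE.
  move: e0; case: e hy => a b /= hy; rewrite ltcE /= => /andP[/eqP b0 _].
  by rewrite ltcE /= b0 eqxx hy.
move=> [e e0 H]; exists e%:C; first by rewrite /= ltcE /= eqxx.
move=> y; rewrite -ball_normE /= normE ltcR; exact: H.
Qed.

End Nrm.
Section Diff.
Context {R : realType}.

Definition D (a : nat -> R) (j n : nat) : R :=
  \sum_(k < j.+1) (-1) ^+ (j - k) * ('C(j, k))%:R * a (k + n)%N.

Lemma Drec a j n : D a j.+1 n = D a j n.+1 - D a j n.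
Proof.
rewrite /D big_ord_recl /= subn0 bin0 mulr1.
under eq_bigr => k _ do rewrite /bump /= add1n subSS binS natrD mulrDr mulrDl.
rewrite big_split /=.
under [X in _ + (_ + X)]eq_bigr => k _ do rewrite addSnnS.
rewrite [X in _ = _ - X]big_ord_recl /= subn0 bin0 mulr1.
rewrite big_ord_recr /= bin_small // mulr0 mul0r addr0.
under [X in _ = _ - (_ + X)]eq_bigr => k _ do rewrite /bump /= add1n.
have -> : \sum_(i < j) (-1) ^+ (j - i) * ('C(j, i.+1))%:R * a (i.+1 + n)%N =
   - \sum_(i < j) (-1) ^+ (j - i.+1) * ('C(j, i.+1))%:R * a (i.+1 + n)%N.
  rewrite -sumrN; apply: eq_bigr => k _.
  by rewrite -(subnSK (ltn_ord k)) exprS mulN1r !mulNr.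
rewrite exprS mulN1r !mulNr; lra.
Qed.


Lemma D0 a n : D a 0 n = a n.
Proof. by rewrite /D big_ord1 /= bin0 expr0 !mul1r. Qed.

Lemma DN a j n : D (fun k => - a k) j n = - D a j n.
Proof. by rewrite /D -sumrN; apply: eq_bigr => k _; rewrite mulrN. Qed.

Lemma Dstep a j n : D a j n.+1 = D a j n + D a j.+1 n.
Proof. rewrite Drec; lra. Qed.

Lemma Dconst a j : (forall n, D a j.+1 n = 0) -> forall n, D a j n = D a j 0.
Proof. by move=> H; elim=> [//|n IH]; rewrite Dstep H addr0. Qed.

Lemma Dgrowth a j : (forall n, D a j.+1 n = 0) -> 0 < D a j 0 ->
  forall L, exists N, forall n, (N <= n)%N -> forall i, (i < j)%N -> L <= D a i n.
Proof.
move=> H c0.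
suff S : forall t L, exists N, forall n, (N <= n)%N ->
    forall i, (j - t <= i)%N -> (i < j)%N -> L <= D a i n.
  move=> L; have [N HN] := S j L; exists N => n Hn i Hi.
  by apply: HN => //; rewrite subnn.
elim=> [|t IH] L.
  by exists 0%N => n _ i; rewrite subn0 => /leq_gtF ->.
have [jt|tj] := leqP j t.
  have [N HN] := IH L; exists N => n Hn i _.
  apply: HN => //; rewrite (_ : (j - t = 0)%N) //.
  by apply/eqP; rewrite subn_eq0.
set i0 := (j - t.+1)%N.
have Hi0 : (j - t = i0.+1)%N by rewrite /i0 subnSK.
set c := D a j 0.
have [N1 HN1] := IH (Num.max L c).
have F : forall n, (N1 <= n)%N -> c <= D a i0.+1 n.
  move=> n Hn; have [lt|ge] := ltnP i0.+1 j.
    apply: le_trans (HN1 n Hn i0.+1 _ lt); first by rewrite le_max lexx orbT.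
    by rewrite Hi0.
  have -> : i0.+1 = j by apply/eqP; rewrite eqn_leq ge /i0 -Hi0 leq_subr.
  by rewrite Dconst.
set d0 := D a i0 N1.
have G : forall s, d0 + s%:R * c <= D a i0 (N1 + s).
  elim=> [|s IHs]; first by rewrite mul0r addr0 addn0.
  rewrite addnS Dstep mulrSr mulrDl mul1r addrA lerD //.
  by apply: F; rewrite leq_addr.
set t' := Num.bound (`|L - d0| / c).
exists (N1 + t')%N => n Hn i Hi Hij.
have Hn1 : (N1 <= n)%N by apply: leq_trans Hn; rewrite leq_addr.
have [ei|nei] := eqVneq i i0.
  rewrite ei -(subnKC Hn1).
  apply: le_trans (G _).
  have : (`|L - d0| / c) < t'%:R by apply: archi_boundP; rewrite divr_ge0 // ltW.
  rewrite ltr_pdivrMr // => h1.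
  have h2 : t'%:R * c <= (n - N1)%:R * c.
    by apply: ler_wpM2r; [exact: ltW | rewrite ler_nat leq_subRL // addnC].
  have h3 := ler_norm (L - d0).
  lra.
have Hi' : (j - t <= i)%N by rewrite Hi0 ltn_neqAle eq_sym nei.
apply: le_trans (HN1 n Hn1 i Hi' Hij); by rewrite le_max lexx.
Qed.

Lemma Dmono a j N : (forall n, D a j.+1 n = 0) -> (0 < j)%N ->
  (forall i, (0 < i)%N -> (i <= j)%N -> 0 < D a i N) ->
  forall s, a N <= a (N + s)%N.
Proof.
move=> H j0 HN.
have P : forall s i, (0 < i)%N -> (i <= j)%N -> 0 < D a i (N + s).
  elim=> [|s IH] i i0 ij; first by rewrite addn0; exact: HN.
  rewrite addnS Dstep; have [lt|ge] := ltnP i j.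
    by rewrite addr_gt0 // IH.
  have -> : i = j by apply/eqP; rewrite eqn_leq ij.
  by rewrite H addr0 IH.
elim=> [|s IH]; first by rewrite addn0.
apply: le_trans IH _; rewrite addnS -(D0 a (N + s).+1) Dstep D0 lerDl ltW //.
exact: P.
Qed.

End Diff.
Section Cont.
Context {R : realType}.

Lemma cvg_bigsum (T0 : Type) (F : set_system T0) (FF : Filter F) n
   (f : 'I_n -> T0 -> R) (a : 'I_n -> R) :
  (forall k, f k @ F --> a k) ->
  (fun y => \sum_(k < n) f k y) @ F --> \sum_(k < n) a k.
Proof.
elim: n f a => [|n IH] f a H.
  under eq_fun => y do rewrite big_ord0.
  by rewrite big_ord0; exact: cvg_cst.
under eq_fun => y do rewrite big_ord_recr.
rewrite big_ord_recr; apply: cvgD; last exact: H.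
exact: (IH (fun k => f (widen_ord (leqnSn n) k))).
Qed.

Lemma powR_cvg (T0 : Type) (F : set_system T0) (FF : Filter F)
   (f : T0 -> R) (l p : R) : 0 < p -> (forall y, 0 <= f y) -> 0 <= l ->
  f @ F --> l -> (fun y => f y `^ p) @ F --> l `^ p.
Proof.
move=> p0 f0 l0 fl.
have [l00|lpos] := eqVneq l 0.
  rewrite l00 powR0 ?gt_eqF //.
  apply/cvgrPdist_lt => e e0.
  have d0 : 0 < e `^ (p^-1) by apply: powR_gt0.
  move/cvgrPdist_lt: fl => /(_ _ d0); apply: filterS => y.
  rewrite l00 sub0r normrN ger0_norm // => hy.
  rewrite sub0r normrN ger0_norm ?powR_ge0 //.
  have -> : e = (e `^ (p^-1)) `^ p.
    by rewrite -powRrM mulVf ?gt_eqF // powRr1 // ltW.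
  by apply: gt0_ltr_powR => //; rewrite ?nnegrE ?powR_ge0.
have lp : 0 < l by rewrite lt_neqAle eq_sym lpos l0.
have h : (fun y => expR (p * ln (f y))) @ F --> expR (p * ln l).
  apply: (@continuous_cvg _ _ _ _ _ (fun y => p * ln (f y)) expR).
    exact: continuous_expR.
  apply: cvgMr.
  apply: continuous_cvg; last exact: fl. exact: continuous_ln.
have -> : l `^ p = expR (p * ln l) by rewrite /powR (negbTE lpos) mulrC.
apply: cvg_trans h; apply: near_eq_cvg.
move/cvgrPdist_lt: fl => /(_ _ lp); apply: filterS => y hy.
have fy : 0 < f y.
  move: hy; rewrite ltr_norml => /andP[_]; lra.
by rewrite /powR gt_eqF // mulrC.
Qed.

End Cont.
Section Op.
Context {R : realType} {X : normedModType R[i]} (T : {linear X -> X}).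
Hypothesis Hb : bounded_op T.

Lemma Tlip : exists2 K : R, 0 < K & forall u v, nrm (T u - T v) <= K * nrm (u - v).
Proof.
case: Hb => M HM; exists (`|M| + 1); first by rewrite ltr_pwDr // normr_ge0.
move=> u v; rewrite -linearB; apply: le_trans (HM _) _.
apply: ler_wpM2r; first exact: nrm_ge0.
have := ler_norm M; lra.
Qed.

Lemma iter_cont k x e : 0 < e -> exists2 d : R, 0 < d &
  forall y, nrm (x - y) < d -> nrm (iter k T x - iter k T y) < e.
Proof.
have [K K0 HK] := Tlip.
elim: k e => [|k IH] e e0; first by exists e.
have [d d0 Hd] := IH (e / K) (divr_gt0 e0 K0).
exists d => // y hy; rewrite !iterS; apply: le_lt_trans (HK _ _) _.
by rewrite -ltr_pdivlMl // mulrC Hd.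
Qed.

Lemma iter_nrm_cvg k x : nrm (iter k T y) @[y --> x] --> nrm (iter k T x).
Proof.
apply/cvgrPdist_lt => e e0; apply/nbhs_nrmP.
have [d d0 Hd] := iter_cont k x e e0; exists d => // y hy.
exact: le_lt_trans (nrm_dist _ _) (Hd _ hy).
Qed.

Definition bseq (p : R) (y : X) (n : nat) := nrm (iter n T y) `^ p.

Lemma Dcvg p i n x : 0 < p ->
  D (bseq p y) i n @[y --> x] --> D (bseq p x) i n.
Proof.
move=> p0; rewrite /D.
apply: (@cvg_bigsum R X (nbhs x) _ i.+1 (fun k y => (-1) ^+ (i - k) * ('C(i, k))%:R * bseq p y (k + n))).
move=> k; apply: cvgMr; apply: powR_cvg => //; first by move=> y; exact: nrm_ge0.
  exact: nrm_ge0.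
exact: (iter_nrm_cvg _ x).
Qed.

Lemma open_nrm_ball x e : open [set y : X | nrm (x - y) < e].
Proof.
rewrite openE => y /= hy; rewrite /interior /=; apply/nbhs_nrmP.
exists (e - nrm (x - y)); first by rewrite subr_gt0.
move=> z hz /=; have := nrm_add (x - y) (y - z).
rewrite addrA subrK; lra.
Qed.

Lemma open_pre k (U : set X) : open U -> open (iter k T @^-1` U).
Proof.
rewrite !openE => oU y /= Uy; rewrite /interior /=.
have /nbhs_nrmP [e e0 He] : nbhs (iter k T y) U by exact: oU.
have [d d0 Hd] := iter_cont k y e e0.
by apply/nbhs_nrmP; exists d => // z /Hd /He.
Qed.

Lemma rec_iter : recurrent T -> forall N (U : set X), open U -> U !=set0 ->
  exists y k, [/\ U y, (N <= k)%N & U (iter k T y)].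
Proof.
move=> Hr; elim=> [|N IH] U oU [u Uu]; first by exists u, 0%N.
have [k1 [k10 [y1 [Uy1 Uky1]]]] := Hr U oU (ex_intro _ u Uu).
have oW : open (U `&` iter k1 T @^-1` U) by apply: openI => //; exact: open_pre.
have [y [k [[Uy Wy] Nk [Uky Wky]]]] := IH _ oW (ex_intro _ y1 (conj Uy1 Uky1)).
exists y, (k1 + k)%N; split => //.
  by rewrite -(add1n N) leq_add.
by rewrite iterD.
Qed.

End Op.
Lemma near_all_le (T0 : Type) (F : set_system T0) (FF : Filter F)
   (P : nat -> T0 -> Prop) j :
  (forall i, (i <= j)%N -> F (P i)) -> F (fun y => forall i, (i <= j)%N -> P i y).
Proof.
elim: j => [|j IH] H.
  by apply: filterS (H 0%N (leqnn _)) => y Py i; rewrite leqn0 => /eqP ->.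
apply: filterS2 (IH (fun i hi => H i (leqW hi))) (H j.+1 (leqnn _)) => y h1 h2 i.
by rewrite leq_eqVlt => /orP[/eqP ->//|]; rewrite ltnS; apply: h1.
Qed.

Section Main.
Context {R : realType} {X : normedModType R[i]} (T : {linear X -> X}).
Hypothesis Hb : bounded_op T.
Variable p : R.
Hypothesis p0 : 0 < p.

Lemma Dshift y j n : D (bseq T p y) j n = D (bseq T p (iter n T y)) j 0.
Proof. by rewrite /D; apply: eq_bigr => k _; rewrite /bseq addn0 iterD. Qed.

Lemma reduce m : (forall y n, D (bseq T p y) m n = 0) -> recurrent T ->
  forall y, bseq T p y 1 = bseq T p y 0.
Proof.
move=> + Hr; elim: m => [|j IH] H.
  by move=> y; have := H y 1%N; have := H y 0%N; rewrite !D0 => -> ->.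
have [j0|jpos] := posnP j.
  move: H; rewrite j0 => H y; have := H y 0%N.
  rewrite Drec !D0 => /eqP; rewrite subr_eq0 => /eqP.
  by rewrite /bseq iter0 => ->.
have [allz|] := pselect (forall y, D (bseq T p y) j 0 = 0).
  by apply: IH => y n; rewrite Dshift allz.
move=> /existsNP [x cx].
have Hx := H x.
have [cneg|cpos|ceq] := ltgtP (D (bseq T p x) j 0) 0; last by [].
  have h1 : forall n, D (fun n => - bseq T p x n) j.+1 n = 0.
    by move=> n; rewrite DN Hx oppr0.
  have h2 : 0 < D (fun n => - bseq T p x n) j 0 by rewrite DN oppr_gt0.
  have [N] := Dgrowth _ _ h1 h2 1.
  move=> /(_ N (leqnn _) 0%N jpos); rewrite D0.
  have := powR_ge0 (nrm (iter N T x)) p; rewrite /bseq; lra.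
set B := (nrm x + 1) `^ p.
have B0 : 0 <= B by exact: powR_ge0.
have [N HN] := Dgrowth _ _ Hx cpos (B + 1).
have HxN : forall i, (0 < i)%N -> (i <= j)%N -> 0 < D (bseq T p x) i N.
  move=> i i0; rewrite leq_eqVlt => /orP[/eqP ->|ij].
    by rewrite (Dconst _ _ Hx).
  by apply: lt_le_trans (HN N (leqnn _) i ij); lra.
have Q1 : \forall y \near x, forall i, (i <= j)%N ->
    (0 < i)%N -> 0 < D (bseq T p y) i N.
  apply: near_all_le => i ij.
  have [i0|ipos] := posnP i; first by rewrite i0; apply: nearW.
  have hp := HxN i ipos ij.
  move/cvgrPdist_lt: (Dcvg T Hb p i N x p0) => /(_ _ hp).
  apply: filterS => y hy _.
  move: hy; rewrite ltr_norml => /andP[_]; lra.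
have Q2 : \forall y \near x, B < D (bseq T p y) 0 N.
  have hp : 0 < D (bseq T p x) 0 N - B.
    by have := HN N (leqnn _) 0%N jpos; lra.
  move/cvgrPdist_lt: (Dcvg T Hb p 0 N x p0) => /(_ _ hp).
  apply: filterS => y; rewrite ltr_norml => /andP[_]; lra.
have Q3 : \forall y \near x, nrm (x - y) < 1.
  by apply/nbhs_nrmP; exists 1.
have [e e0 He] := (nbhs_nrmP _ _).1 (filterI Q1 (filterI Q2 Q3)).
have oU := open_nrm_ball x e.
have Ux : [set y | nrm (x - y) < e] x by rewrite /= subrr nrm0.
have [y [k [Uy Nk Uky]]] := rec_iter T Hb Hr N _ oU (ex_intro _ x Ux).
have [Q1y [Q2y _]] := He y Uy.
have [_ [_ Q3k]] := He _ Uky.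
have mono := Dmono _ _ N (H y) jpos (fun i i0 ij => Q1y i ij i0) (k - N).
rewrite subnKC // in mono.
rewrite D0 in Q2y.
have hk : nrm (iter k T y) <= nrm x + 1.
  have := nrm_add x (iter k T y - x); rewrite addrC subrK (nrmB (iter k T y) x).
  lra.
have : bseq T p y k <= B.
  rewrite /bseq /B; apply: ge0_ler_powR => //; first exact: ltW.
    by rewrite nnegrE nrm_ge0.
  by rewrite nnegrE; have := nrm_ge0 x; lra.
lra.
Qed.

End Main.

Lemma nrm_eq0 {R : realType} {X : normedModType R[i]} (v : X) : nrm v = 0 -> v = 0.
Proof. by move=> h; apply/normr0_eq0; rewrite normE h. Qed.

Lemma ball_nrm {R : realType} {X : normedModType R[i]} (x y : X) (e : R[i]) :
  0 < e -> nrm (x - y) < complex.Re e -> ball x e y.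
Proof.
move=> e0 hy; rewrite -ball_normE /= normE.
move: e0 hy; case: e => a b /=; rewrite ltcE /= => /andP[/eqP b0 _] hy.
by rewrite ltcE /= b0 eqxx hy.
Qed.

Theorem proposition8p5 (R : realType) (X : completeNormedModType R[i])
    (T : {linear X -> X}) (m : nat) :
  bounded_op T -> m_isometry T m -> recurrent T ->
  (forall x : X, nrm (T x) = nrm x) /\ (forall y : X, exists x : X, T x = y).
Proof.
move=> Hb [p [p1 Hm]] Hr.
have p0 : 0 < p by apply: lt_le_trans ltr01 p1.
have Hiso : forall x : X, nrm (T x) = nrm x.
  have HD : forall y n, D (bseq T p y) m n = 0.
    move=> y n; rewrite Dshift; have := Hm (iter n T y).
    rewrite /D /bseq => h; rewrite -[X in _ = X]h; apply: eq_bigr => k _; by rewrite addn0.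
  move=> x; have := reduce T Hb p p0 m HD Hr x; rewrite /bseq /= => h.
  apply: (powR_injective p0) => //; rewrite nnegrE; exact: nrm_ge0.
split => // y.
have dense : forall e : R, 0 < e -> exists z, nrm (T z - y) < e.
  move=> e e0; apply: contrapT => hno.
  have oU := open_nrm_ball y e.
  have Uy : [set w | nrm (y - w) < e] y by rewrite /= subrr nrm0.
  have [k [k0 [w [_ Ukw]]]] := Hr _ oU (ex_intro _ y Uy).
  apply: hno; exists (iter k.-1 T w).
  by rewrite -iterS prednK // nrmB.
have /choice [xs Hxs] : forall n : nat, exists z, nrm (T z - y) < n.+1%:R^-1.
  by move=> n; apply: dense; rewrite invr_gt0 ltr0n.
have Hdist : forall a b, nrm (xs a - xs b) < a.+1%:R^-1 + b.+1%:R^-1.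
  move=> a b; rewrite -Hiso linearB.
  have := nrm_add (T (xs a) - y) (y - T (xs b)).
  rewrite addrA subrK (nrmB y) => h; exact: le_lt_trans h (ltrD (Hxs a) (Hxs b)).
have cau : cauchy (xs @ \oo).
  apply: cauchy_exP => eps eps0.
  set r := complex.Re eps.
  have r0 : 0 < r by move: eps0; rewrite ltcE /= => /andP[].
  set K := Num.bound (2 / r).
  have hK : 2 / r < K%:R by apply: archi_boundP; rewrite divr_ge0 // ltW.
  exists (xs K); apply: filterS (nbhs_infty_ge K) => n Kn.
  apply: ball_nrm => //; apply: lt_le_trans (Hdist K n) _.
  have h1 : n.+1%:R^-1 <= K.+1%:R^-1 :> R.
    by rewrite lef_pV2 ?posrE ?ltr0n // ler_nat ltnS.
  have h2 : 2 * K.+1%:R^-1 < r.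
    rewrite ltr_pdivrMr ?ltr0n // mulrC -ltr_pdivrMr //.
    by apply: lt_trans hK _; rewrite ltr_nat.
  move: h1 h2; set u := n.+1%:R^-1; set v := K.+1%:R^-1; lra.
have /cauchy_cvgP cv := cau.
set x := lim (xs @ \oo).
exists x.
apply: subr0_eq; apply: nrm_eq0.
have key : forall e, 0 < e -> nrm (T x - y) < e.
  move=> e e0.
  have e20 : 0 < e / 2 by rewrite divr_gt0.
  have c1 : \forall n \near \oo, nrm (x - xs n) < e / 2.
    have e2c : 0 < (e / 2)%:C by rewrite ltcE /= eqxx e20.
    move/cvgrPdist_lt: cv => /(_ _ e2c); apply: filterS => n.
    by rewrite normE ltcR.
  set K := Num.bound (2 / e).
  have hK : 2 / e < K%:R by apply: archi_boundP; rewrite divr_ge0 // ltW.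
  have c2 : \forall n \near \oo, n.+1%:R^-1 < e / 2.
    apply: filterS (nbhs_infty_ge K) => n Kn.
    rewrite -[X in _ < X]invrK ltf_pV2 ?posrE ?ltr0n ?invr_gt0 //.
    rewrite invf_div; apply: lt_le_trans hK _.
    by rewrite ler_nat; apply: leqW.
  have [n [hn1 hn2]] := filter_ex (filterI c1 c2).
  have := nrm_add (T x - T (xs n)) (T (xs n) - y).
  rewrite addrA subrK -linearB Hiso => h.
  have := Hxs n; move: hn2 h; set u := n.+1%:R^-1; lra.
apply/eqP; rewrite eq_le nrm_ge0 andbT leNgt; apply/negP => pos.
by have := key _ pos; rewrite ltxx.
Qed.
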